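(* Let $G$ be a finite non-abelian exponent-critical group whose order is divisible by three distinct primes. Then $G$ has a non-trivial central cyclic Sylow subgroup, and all Sylow subgroups of $G$ are abelian.
   Context: A finite group $G$ is exponent-critical if $\exp(G)$ is not the least common multiple of the exponents of the proper non-abelian subgroups of $G$. *)

(* Defs.v *)
From mathcomp Require Import all_boot all_fingroup all_solvable.
Set Implicit Arguments. Unset Strict Implicit. Unset Printing Implicit Defensive.
Local Open Scope group_scope.

Definition lcm_exp_proper_nonabelian (gT : finGroupType) (G : {group gT}) : nat :=
  \big[lcmn/1%N]_(H : {group gT} | (H \proper G) && ~~ abelian H) exponent H.

Definition exponent_critical (gT : finGroupType) (G : {group gT}) : bool :=
  exponent G != lcm_exp_proper_nonabelian G.

(* Main.v *)
Require Import Defs.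
From mathcomp Require Import all_boot all_fingroup all_solvable.
From mathcomp Require nmodule ssralg.
Set Implicit Arguments. Unset Strict Implicit. Unset Printing Implicit Defensive.
Local Open Scope group_scope.


Lemma fusion_abelian (gT : finGroupType) (G P : {group gT}) p :
  p.-Sylow(G) P -> abelian P -> 'N_G(P) \subset 'C(P) ->
  forall a g, a \in P -> g \in G -> a ^ g \in P -> a ^ g = a.
Proof.
move=> sylP abP nc a g Pa Gg Pag.
have sPG := pHall_sub sylP.
have aCP : a \in 'C(P) := subsetP abP a Pa.
have sPC : P \subset 'C_G[a ^ g].
  by rewrite subsetI sPG sub_cent1 (subsetP abP).
have sPgC : P :^ g \subset 'C_G[a ^ g].
  rewrite subsetI -{1}(conjGid Gg) conjSg sPG /= cent1J conjSg.
  by rewrite sub_cent1.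
have sylPC : p.-Sylow('C_G[a ^ g]) P := pHall_subl sPC (subsetIl _ _) sylP.
have sylPgC : p.-Sylow('C_G[a ^ g]) (P :^ g)%G.
  by apply: pHall_subl sPgC (subsetIl _ _) _; rewrite pHallJ.
have [c Cc defPg] := Sylow_trans sylPC sylPgC.
have /setIP[Gc cac] := Cc.
have nPgc : g * c^-1 \in 'N_G(P).
  rewrite inE groupM ?groupV //=; apply/normP.
  by rewrite conjsgM /= defPg conjsgK.
have cPgc := subsetP nc _ nPgc.
have e1 : a ^ (g * c^-1) = a.
  by have h := centP cPgc a Pa; rewrite conjgE -h mulKg.
have e2 : a ^ g = a ^ c by rewrite -{1}(mulgKV c g) conjgM e1.
move/cent1P: cac => cac.
have : (a ^ c) ^ c = a ^ c.
  by rewrite -e2 conjgE -cac mulKg.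
by move/conjg_inj; rewrite e2.
Qed.

Section BurnsideSec.
Import FiniteModule.

Lemma transfer_abelian_sylow (gT : finGroupType) (G P : {group gT}) p
  (sylP : p.-Sylow(G) P) (abA : abelian (idm P @* P)) :
  abelian P -> 'N_G(P) \subset 'C(P) ->
  forall g, g \in P -> transfer G abA g = (fmod abA g *+ #|G : P|)%R.
Proof.
move=> abP nc g Pg.
have sPG := pHall_sub sylP.
have Gg : g \in G := subsetP sPG g Pg.
have trX := transversalP (rcosets_cycle_partition sPG Gg).
rewrite (transfer_cycle_expansion sPG abA Gg trX).
rewrite -(sum_index_rcosets_cycle sPG Gg trX) -Algebra.sumrMnr.
apply: eq_bigr => y Xy.
have Gy : y \in G := subsetP (transversal_sub trX) y Xy.
set n := #|<[g]> : P :* y|.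
have Pgn : g ^+ n \in P by rewrite groupX.
have h : (g ^+ n) ^ y^-1 \in P.
  have := mulg_exp_card_rcosets P g y; rewrite -/n mem_rcoset.
  by rewrite conjgE invgK mulgA.
have -> : (g ^+ n) ^ y^-1 = g ^+ n.
  by apply: (fusion_abelian sylP abP nc Pgn) => //; rewrite groupV.
rewrite /restrm /=.
by rewrite (fmodX abA n (_ : g \in idm P @* P)) // morphim_idm.
Qed.

Lemma burnside_complement (gT : finGroupType) (G P : {group gT}) p :
  p.-Sylow(G) P -> abelian P -> 'N_G(P) \subset 'C(P) ->
  exists K : {group gT}, K <| G /\ #|K| = #|G : P|.
Proof.
move=> sylP abP nc.
have abA : abelian (idm P @* P) by rewrite morphim_idm.
have sPG := pHall_sub sylP.
pose V := transfer_morphism G abA.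
exists ('ker V)%G; split; first exact: ker_normal.
have nsK : 'ker V <| G := ker_normal V.
have TI : 'ker V :&: P = 1.
  apply/trivgP/subsetP => g /setIP[Kg Pg]; rewrite inE.
  have := mker Kg.
  rewrite /= (transfer_abelian_sylow sylP abA abP nc Pg) => e.
  have gA : g \in idm P @* P by rewrite morphim_idm.
  have e2 : g ^+ #|G : P| = 1.
    have gnA : g ^+ #|G : P| \in idm P @* P by rewrite groupX.
    by rewrite -(fmodK abA gnA) fmodX // e.
  have cop : coprime #|P| #|G : P|.
    by case/and3P: sylP => _ pP p'i; apply: pnat_coprime pP p'i.
  have : (#[g] %| gcdn #|P| #|G : P|)%N.
    by rewrite dvdn_gcd order_dvdG //= order_dvdn e2.
  by rewrite (eqP cop) dvdn1 order_eq1.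
have le1 : #|G : 'ker V| <= #|P|.
  have := card_morphim V G; rewrite setIid => <-.
  apply: leq_trans (max_card _) _.
  rewrite -(card_imset _ val_inj).
  apply: (@leq_trans #|idm P @* P|); last by rewrite morphim_idm.
  by apply: subset_leq_card; apply/subsetP => _ /imsetP[u _ ->]; exact: fmodP.
have le2 : #|'ker V| * #|P| <= #|G|.
  by rewrite -TI_cardMg // subset_leq_card // mul_subG // normal_sub.
have e3 := Lagrange (normal_sub nsK).
have e4 := Lagrange sPG.
apply/eqP; rewrite -(eqn_pmul2r (cardG_gt0 P)) [(#|G : P| * _)%N]mulnC e4.
rewrite eqn_leq le2 /= -{1}e3 leq_mul2l le1 orbT //.
Qed.
End BurnsideSec.


Definition pq (p q : nat) : nat_pred := [pred r | (r == p) || (r == q)].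

Lemma pq_proper (gT : finGroupType) (G H : {group gT}) p q :
  (3 <= size (primes #|G|))%N -> H \subset G -> (pq p q).-group H -> H \proper G.
Proof.
move=> pr3 sHG pqH; rewrite properE sHG /=; apply/negP => sGH.
have /andP[_ /allP A] := pgroupS sGH pqH.
have : (size (primes #|G|) <= size [:: p; q])%N.
  apply: uniq_leq_size; first exact: primes_uniq.
  by move=> r /A; rewrite !inE.
by rewrite leqNgt (leq_trans _ pr3).
Qed.

Lemma cent_by_parts (gT : finGroupType) (P : {set gT}) (y : gT) :
  (forall q, q \in \pi(#[y]) -> y.`_q \in 'C(P)) -> y \in 'C(P).
Proof.
move=> H.
have eS : 'C_<[y]>(P) = <[y]>.
  apply/eqP; rewrite eqEcard subsetIl /=; apply: dvdn_leq; first exact: cardG_gt0.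
  apply/(dvdn_partP _ (order_gt0 y)) => q piq.
  rewrite -order_constt; apply: cardSg.
  by rewrite cycle_subG inE cycle_constt H.
have : y \in 'C_<[y]>(P) by rewrite eS cycle_id.
by case/setIP.
Qed.

Lemma cent_by_sylows (gT : finGroupType) (G C : {group gT}) :
  C \subset G ->
  (forall q, q \in \pi(#|G|) -> exists Q : {group gT}, q.-Sylow(G) Q /\ Q \subset C) ->
  C :=: G.
Proof.
move=> sCG H; apply/eqP; rewrite eqEcard sCG /=; apply: dvdn_leq; first exact: cardG_gt0.
apply/(dvdn_partP _ (cardG_gt0 G)) => q piq.
have [Q [sylQ sQC]] := H q piq.
by rewrite -(card_Hall sylQ) cardSg.
Qed.


Theorem mainTheorem6 (gT : finGroupType) (G : {group gT}) :
  ~~ abelian G -> exponent_critical G -> (3 <= size (primes #|G|))%N ->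
  (exists (p : nat) (P : {group gT}),
      [/\ p.-Sylow(G) P, P :!=: 1, P \subset 'Z(G) & cyclic P])
  /\ (forall (p : nat) (P : {group gT}), p.-Sylow(G) P -> abelian P).
Proof.
move=> nabG crit pr3.
move: crit; rewrite /exponent_critical; set L := lcm_exp_proper_nonabelian G => crit.
have dL : forall H : {group gT}, H \proper G -> ~~ abelian H -> (exponent H %| L)%N.
  move=> H prH nabH; rewrite /L /lcm_exp_proper_nonabelian (bigD1 H) /=; last by rewrite prH.
  exact: dvdn_lcml.
have LdG : (L %| exponent G)%N.
  rewrite /L /lcm_exp_proper_nonabelian; apply: (big_ind (fun n => n %| exponent G)%N).
  - exact: dvd1n.
  - by move=> m n dm dn; rewrite dvdn_lcm dm dn.
  - by move=> H /andP[prH _]; apply: exponentS; exact: proper_sub.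
have nd : ~~ (exponent G %| L)%N.
  by apply: contra crit => d; rewrite eqn_dvd d LdG.
have [p pi_p ndp] : exists2 p, p \in primes (exponent G) & ~~ ((exponent G)`_p %| L)%N.
  apply/hasP; apply: contraR nd => /hasPn A.
  apply/(dvdn_partP _ (exponent_gt0 G)) => r pir.
  by have := A r pir; rewrite negbK.
have pr_p : prime p by move: pi_p; rewrite mem_primes => /andP[].
have [P sylP] := Sylow_exists p G.
have sPG := pHall_sub sylP.
have pP := pHall_pgroup sylP.
have [x Px ox] := exponent_witness (pgroup_nil pP).
have ox2 : #[x] = ((exponent G)`_p)%N by rewrite -ox (exponent_Hall sylP).
have Gx : x \in G := subsetP sPG x Px.
have crit' : forall H : {group gT}, x \in H -> H \proper G -> abelian H.
  move=> H xH prH; apply: contraR ndp => nabH.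
  by rewrite -ox2 (dvdn_trans (dvdn_exponent xH)) // dL.
have ntx : x != 1.
  apply: contra ndp => /eqP x1; rewrite -ox2 x1 order1; exact: dvd1n.
have ppq : forall q, (pq p q).-group P.
  by move=> q; apply: pi_pnat pP _; rewrite !inE eqxx.
have abP : abelian P := crit' P Px (pq_proper pr3 sPG (ppq p)).
have nc : 'N_G(P) \subset 'C(P).
  apply/subsetP => y /setIP[Gy Ny]; apply: cent_by_parts => q piq.
  have yqy : y.`_q \in <[y]> := cycle_constt q y.
  have Nyq : <[y.`_q]> \subset 'N(P).
    by rewrite cycle_subG (subsetP _ _ yqy) // cycle_subG.
  have Gyq : y.`_q \in G by rewrite (subsetP _ _ yqy) // cycle_subG.
  have sHG : P <*> <[y.`_q]> \subset G by rewrite join_subG sPG cycle_subG.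
  have defH := norm_joinEr Nyq.
  have yqH : y.`_q \in P <*> <[y.`_q]> by rewrite (subsetP (joing_subr _ _)) ?cycle_id.
  case: (eqVneq q p) => [eqp | nqp].
    subst q.
    have pH : p.-group (P <*> <[y.`_p]>) by rewrite defH pgroupM pP; exact: p_elt_constt.
    have eH := sub_pHall sylP pH (joing_subl _ _) sHG.
    by move: yqy yqH => _; rewrite eH => /(subsetP abP).
  have pqH : (pq p q).-group (P <*> <[y.`_q]>).
    rewrite defH pgroupM ppq /=; apply: pi_pnat (p_elt_constt q y) _.
    by rewrite !inE eqxx orbT.
  have abH := crit' _ (subsetP (joing_subl _ _) x Px) (pq_proper pr3 sHG pqH).
  exact: subsetP (centS (joing_subl _ _)) _ (subsetP abH _ yqH).
have [K [nsK oK]] := burnside_complement sylP abP nc.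
have sKG := normal_sub nsK.
have p'i : p^'.-nat #|G : P| by case/and3P: sylP.
have copKP : coprime #|K| #|P| by rewrite oK coprime_sym (pnat_coprime pP p'i).
have nKP : P \subset 'N(K) := subset_trans sPG (normal_norm nsK).
have oG : (#|K| * #|P|)%N = #|G| by rewrite oK mulnC Lagrange.
have oGK : #|G : K| = #|P|.
  apply/eqP; rewrite -(eqn_pmul2l (cardG_gt0 K)) (Lagrange sKG) oG //.
have E : forall q, q != p -> exists Q : {group gT},
    [/\ q.-Sylow(G) Q, Q \subset 'C(P) & abelian Q].
  move=> q nqp.
  have [Q sylQK nQ] := sol_coprime_Sylow_exists q (pgroup_sol pP) nKP copKP.
  have sQK := pHall_sub sylQK.
  have sQG := subset_trans sQK sKG.
  have sylQ : q.-Sylow(G) Q.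
    rewrite /pHall sQG (pHall_pgroup sylQK) /= -(Lagrange_index sKG sQK) pnatM.
    rewrite oGK (pi_pnat pP) /=; last by rewrite !inE eq_sym.
    by case/and3P: sylQK.
  have sHG : Q <*> P \subset G by rewrite join_subG sQG sPG.
  have defH := norm_joinEr nQ.
  have pqH : (pq p q).-group (Q <*> P).
    rewrite (norm_joinEr nQ) pgroupM ppq andbT; apply: pi_pnat (pHall_pgroup sylQ) _.
    by rewrite !inE eqxx orbT.
  have abH := crit' _ (subsetP (joing_subr _ _) x Px) (pq_proper pr3 sHG pqH).
  move: abH; rewrite /= defH abelianM => /and3P[abQ _ cQP].
  by exists Q; split=> //; rewrite centsC.
have eC : 'C_G(P) :=: G.
  apply: cent_by_sylows; first exact: subsetIl.
  move=> q _; case: (eqVneq q p) => [-> | nqp].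
    by exists P; split=> //; rewrite subsetI sPG.
  have [Q [sylQ cQP _]] := E q nqp.
  by exists Q; split=> //; rewrite subsetI (pHall_sub sylQ).
have cGP : G \subset 'C(P) by rewrite -eC subsetIr.
split; last first.
  move=> r R sylR; case: (eqVneq r p) => [er | nrp].
    subst r; have [g Gg ->] := Sylow_trans sylP sylR; by rewrite abelianJ.
  have [Q [sylQ _ abQ]] := E r nrp.
  by have [g Gg ->] := Sylow_trans sylQ sylR; rewrite abelianJ.
exists p, P.
have TI : K :&: P = 1 := coprime_TIg copKP.
have nabK : ~~ abelian K.
  apply: contra nabG => abK.
  have eKP : K * P = G.
    by apply/eqP; rewrite eqEcard mul_subG //= TI_cardMg // oG.
  by rewrite -eKP abelianM abK abP centsC (subset_trans sKG cGP).
have sHG : K <*> <[x]> \subset G by rewrite join_subG sKG cycle_subG.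
have nKx : <[x]> \subset 'N(K) by rewrite cycle_subG (subsetP nKP).
have nprH : ~~ (K <*> <[x]> \proper G).
  apply: contra nabK => prH.
  have := crit' _ (subsetP (joing_subr _ _) x (cycle_id x)) prH.
  by apply: abelianS; exact: joing_subl.
have leG : (#|G| <= #|K| * #[x])%N.
  move: nprH; rewrite properEcard sHG /= -leqNgt (norm_joinEr nKx) => le.
  apply: leq_trans le _; rewrite (mul_cardG K <[x]>) leq_pmulr //.
have sxP : <[x]> \subset P by rewrite cycle_subG.
have eP : P :=: <[x]>.
  apply/eqP; rewrite eq_sym eqEcard sxP /=.
  by rewrite -(leq_pmul2l (cardG_gt0 K)) oG.
split=> //.
- by apply: contra ntx => /eqP P1; move: Px; rewrite P1 inE.
- by rewrite /center subsetI sPG centsC.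
- by rewrite eP cycle_cyclic.
Qed.
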